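(* For $[0,1]$ valuation functions, there is an absolute constant $c>0$ such that for every $n\ge1$, random priority on $n$ agents and $n$ items satisfies $ar(RP)\ge c/\sqrt n$.
   Context: Agents $N=\{1,\dots,n\}$, items $M=\{1,\dots,n\}$, outcomes are bijections $\mu$ ($O$ the set of outcomes). A $[0,1]$ valuation function is an injective $u_i:M\to[0,1]$ with $\max_j u_i(j)=1$ (the minimum need not be $0$); $V^n$ is the set of profiles of such functions. Random priority (RP) picks a uniformly random ordering of the agents and in that order gives each agent its most preferred still-unassigned item. $ar(J)=\inf_{\mathbf u\in V^n}\mathbb E[\sum_i u_i(J(\mathbf u)_i)]/\max_{\mu\in O}\sum_i u_i(\mu_i)$. *)

(* Defs.v *)
From mathcomp Require Import all_boot all_fingroup.
From Stdlib Require Import Reals.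
Set Implicit Arguments. Unset Strict Implicit. Unset Printing Implicit Defensive.

Definition leRb (x y : R) : bool := if Rle_dec x y then true else false.

(* A profile of [0,1] valuation functions for n agents over n items:
   u i j = value of agent i for item j. *)
Definition valuation01 (n : nat) (ui : 'I_n -> R) : Prop :=
  injective ui /\ (forall j, (0 <= ui j <= 1)%R) /\
  (exists j, ui j = 1%R).

Definition profile01 (n : nat) (u : 'I_n -> 'I_n -> R) : Prop :=
  forall i, valuation01 (u i).

Definition welfare (n : nat) (u : 'I_n -> 'I_n -> R) (mu : 'S_n) : R :=
  \big[Rplus/0%R]_(i : 'I_n) u i (mu i).

(* Optimal welfare: max over all bijections (welfare is >= 0, so 0 is a
   neutral starting value; the set of outcomes is nonempty). *)
Definition opt_welfare (n : nat) (u : 'I_n -> 'I_n -> R) : R :=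
  \big[Rmax/0%R]_(mu : 'S_n) welfare u mu.

(* Each agent takes its most preferred available item
   (unique by injectivity of the valuation). *)
Fixpoint serial_dictatorship (n : nat) (u : 'I_n -> 'I_n -> R)
    (s : seq 'I_n) (avail : {set 'I_n}) : seq ('I_n * 'I_n) :=
  match s with
  | [::] => [::]
  | i :: s' =>
      match [pick j in avail | [forall k in avail, leRb (u i k) (u i j)]] with
      | Some j => (i, j) :: serial_dictatorship u s' (avail :\ j)
      | None => serial_dictatorship u s' avail
      end
  end.

(* Welfare of the matching produced by serial dictatorship with ordering
   pi (pi k = agent in position k). *)
Definition sd_welfare (n : nat) (u : 'I_n -> 'I_n -> R) (pi : 'S_n) : R :=
  \big[Rplus/0%R]_(p <- serial_dictatorship u [seq pi k | k <- enum 'I_n] setT)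
     u p.1 p.2.

Definition RP_welfare (n : nat) (u : 'I_n -> 'I_n -> R) : R :=
  (/ INR (n`!) * \big[Rplus/0%R]_(pi : 'S_n) sd_welfare u pi)%R.

(* Main.v *)
Require Import Defs.
From mathcomp Require Import all_boot all_fingroup.
From Stdlib Require Import Reals.
From HB Require Import structures.
From Stdlib Require Import Lra Lia.
Set Implicit Arguments. Unset Strict Implicit. Unset Printing Implicit Defensive.

Lemma Rplus_assoc' : associative Rplus. Proof. by move=> x y z; rewrite Rplus_assoc. Qed.
HB.instance Definition _ := Monoid.isComLaw.Build R 0%R Rplus Rplus_assoc' Rplus_comm Rplus_0_l.

Lemma leRbP x y : reflect (x <= y)%R (leRb x y).
Proof. rewrite /leRb; case: Rle_dec => h; constructor => //. Qed.

Lemma rsum_le (I : Type) (r : seq I) (P : pred I) (F G : I -> R) :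
  (forall i, P i -> (F i <= G i)%R) ->
  (\big[Rplus/0%R]_(i <- r | P i) F i <= \big[Rplus/0%R]_(i <- r | P i) G i)%R.
Proof.
move=> h; apply: (big_ind2 (fun x y => (x <= y)%R)) => //; first lra.
by move=> *; lra.
Qed.

Lemma rsum_ge0 (I : Type) (r : seq I) (P : pred I) (F : I -> R) :
  (forall i, P i -> (0 <= F i)%R) ->
  (0 <= \big[Rplus/0%R]_(i <- r | P i) F i)%R.
Proof.
move=> h; apply: (big_ind (fun x => (0 <= x)%R)) => //; first lra.
by move=> *; lra.
Qed.

Lemma rsum_scale (I : Type) (r : seq I) (P : pred I) (F : I -> R) c :
  \big[Rplus/0%R]_(i <- r | P i) (c * F i)%R = (c * \big[Rplus/0%R]_(i <- r | P i) F i)%R.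
Proof.
apply: (big_ind2 (fun x y => x = c * y)%R) => //; first lra.
by move=> x1 x2 y1 y2 -> ->; lra.
Qed.

Lemma iter_Rplus k c : iter k (Rplus c) 0%R = (INR k * c)%R.
Proof. elim: k => [|k IH]; first by rewrite /=; lra. rewrite [iter _ _ _]/= IH S_INR; lra. Qed.

Lemma rsum_const_seq (I : Type) (r : seq I) c :
  \big[Rplus/0%R]_(i <- r) c = (INR (size r) * c)%R.
Proof. by rewrite big_const_seq count_predT iter_Rplus. Qed.

Lemma rsum_const_fin (I : finType) c :
  \big[Rplus/0%R]_(i : I) c = (INR #|I| * c)%R.
Proof. by rewrite big_const iter_Rplus. Qed.

Lemma exists_max (T : eqType) (f : T -> R) (s : seq T) x :
  x \in s -> exists j, j \in s /\ forall k, k \in s -> (f k <= f j)%R.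
Proof.
elim: s x => [//|y s IH] x; rewrite inE => _.
case: s IH => [|z s] IH.
  by exists y; split; [rewrite inE eqxx | move=> k; rewrite inE => /eqP ->; lra].
have [j [js hj]] := IH z (mem_head _ _).
case: (Rle_dec (f y) (f j)) => hy.
  exists j; split; first by rewrite inE js orbT.
  by move=> k; rewrite inE => /orP [/eqP -> // | /hj].
exists y; split; first by rewrite inE eqxx.
move=> k; rewrite inE => /orP [/eqP -> | /hj]; lra.
Qed.

Definition pickb n (u : 'I_n -> 'I_n -> R) i (A : {set 'I_n}) :=
  [pick j in A | [forall k in A, leRb (u i k) (u i j)]].
Definition nextA n (u : 'I_n -> 'I_n -> R) i (A : {set 'I_n}) :=
  match pickb u i A with Some j => A :\ j | None => A end.
Fixpoint availA n (u : 'I_n -> 'I_n -> R) (s : seq 'I_n) A :=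
  match s with [::] => A | i :: s' => availA u s' (nextA u i A) end.
Definition gain n (u : 'I_n -> 'I_n -> R) (mu : 'S_n) i (A : {set 'I_n}) :=
  if mu i \in A then u i (mu i) else 0%R.
Fixpoint gainsum n (u : 'I_n -> 'I_n -> R) mu (s : seq 'I_n) A :=
  match s with [::] => 0%R | i :: s' => (gain u mu i A + gainsum u mu s' (nextA u i A))%R end.
Definition sdsum n (u : 'I_n -> 'I_n -> R) s A :=
  \big[Rplus/0%R]_(p <- serial_dictatorship u s A) u p.1 p.2.

Lemma pick_max n (u : 'I_n -> 'I_n -> R) (i : 'I_n) (A : {set 'I_n}) x : x \in A ->
  exists j, pickb u i A = Some j /\ j \in A /\ (u i x <= u i j)%R.
Proof.
move=> xA; rewrite /pickb; case: pickP => [j /andP [jA /forall_inP hj] | hn].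
  by exists j; split=> //; split=> //; apply/leRbP/hj.
have xe : x \in enum A by rewrite mem_enum.
have [j [js hj]] := exists_max (u i) xe.
move: (hn j); rewrite -mem_enum js /=; move/negP; case.
by apply/forall_inP => k kA; apply/leRbP/hj; rewrite mem_enum.
Qed.

Lemma u01 n (u : 'I_n -> 'I_n -> R) : profile01 u -> forall i j, (0 <= u i j <= 1)%R.
Proof. by move=> hu i j; case: (hu i) => _ [h _]. Qed.

Lemma sdsum_cons n (u : 'I_n -> 'I_n -> R) i s A :
  sdsum u (i :: s) A = match pickb u i A with
    Some j => (u i j + sdsum u s (A :\ j))%R | None => sdsum u s A end.
Proof.
rewrite /sdsum /= -/(pickb u i A); case: (pickb u i A) => [j|] //.
by rewrite big_cons.
Qed.

Lemma sdsum_ge0 n (u : 'I_n -> 'I_n -> R) s A : profile01 u -> (0 <= sdsum u s A)%R.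
Proof.
move=> hu; apply: rsum_ge0 => p _; have := u01 hu p.1 p.2; lra.
Qed.

Lemma sd_ge_gain n (u : 'I_n -> 'I_n -> R) mu s A : profile01 u ->
  (gainsum u mu s A <= sdsum u s A)%R.
Proof.
move=> hu; elim: s A => [|i s IH] A.
  by rewrite /sdsum /= big_nil; lra.
rewrite sdsum_cons /= /nextA /gain.
case: ifP => hm.
  have [j [-> [_ hj]]] := pick_max u i hm.
  have := IH (A :\ j); lra.
case e: (pickb u i A) => [j|].
  have := IH (A :\ j); have := u01 hu i j; lra.
have := IH A; lra.
Qed.

Lemma sd_ge1 n (u : 'I_n -> 'I_n -> R) i s : profile01 u ->
  (1 <= sdsum u (i :: s) setT)%R.
Proof.
move=> hu; rewrite sdsum_cons; case: (hu i) => _ [_ [j1 hj1]].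
have [j [-> [_ hj]]] := pick_max u i (in_setT j1).
rewrite hj1 in hj; have := sdsum_ge0 s (setT :\ j) hu; lra.
Qed.

Lemma availA_rcons n (u : 'I_n -> 'I_n -> R) s i A :
  availA u (rcons s i) A = nextA u i (availA u s A).
Proof. by elim: s A => [|x s IH] A //=. Qed.

Lemma gainsum_nth n (u : 'I_n -> 'I_n -> R) mu i0 s A :
  gainsum u mu s A =
  \big[Rplus/0%R]_(0 <= t < size s) gain u mu (nth i0 s t) (availA u (take t s) A).
Proof.
elim: s A => [|i s IH] A; first by rewrite big_nil.
by rewrite /= big_nat_recl // IH.
Qed.

Lemma ind_sum n (r : seq 'I_n) k0 : uniq r ->
  (\big[Rplus/0%R]_(k <- r) (if k == k0 then 1 else 0) <= 1)%R.
Proof.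
elim: r => [|y r IH] /=; first by rewrite big_nil; lra.
move=> /andP [yr ur]; rewrite big_cons; case: eqP => [e|_].
  rewrite big1_seq; first lra.
  move=> k /andP [_ kr]; case: eqP => // ek; subst; by rewrite kr in yr.
have := IH ur; lra.
Qed.

Lemma gain_sub n (u : 'I_n -> 'I_n -> R) (mu : 'S_n) k B j : profile01 u ->
  (gain u mu k (B :\ j) <= gain u mu k B <=
   gain u mu k (B :\ j) + (if k == (mu^-1)%g j then 1 else 0))%R.
Proof.
move=> hu; have := u01 hu k (mu k); rewrite /gain in_setD1.
case: (boolP (mu k \in B)) => hB; rewrite ?andbF ?andbT.
  case: eqP => [e|ne] /=.
    have -> : k == (mu^-1)%g j by rewrite -e permK.
    lra.
  case: eqP => [e|_]; last lra.
  by case: ne; rewrite e permKV.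
by case: ifP => _; lra.
Qed.

Lemma next_sum n (u : 'I_n -> 'I_n -> R) (mu : 'S_n) (r : seq 'I_n) i B :
  profile01 u -> uniq r ->
  (\big[Rplus/0%R]_(k <- r) gain u mu k (nextA u i B) <=
   \big[Rplus/0%R]_(k <- r) gain u mu k B <=
   \big[Rplus/0%R]_(k <- r) gain u mu k (nextA u i B) + 1)%R.
Proof.
move=> hu ur; rewrite /nextA; case: (pickb u i B) => [j|]; last lra.
split.
  by apply: rsum_le => k _; case: (gain_sub mu k B j hu).
apply: Rle_trans (_ : _ <= \big[Rplus/0%R]_(k <- r)
   (gain u mu k (B :\ j) + (if k == (mu^-1)%g j then 1 else 0))%R)%R _.
  by apply: rsum_le => k _; case: (gain_sub mu k B j hu).
rewrite big_split /=; have := ind_sum ((mu^-1)%g j) ur; lra.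
Qed.

Definition Pl n (u : 'I_n -> 'I_n -> R) mu (s : seq 'I_n) A t :=
  \big[Rplus/0%R]_(k <- drop t s) gain u mu k (availA u (take t s) A).
Definition gl n (u : 'I_n -> 'I_n -> R) mu i0 (s : seq 'I_n) A t :=
  gain u mu (nth i0 s t) (availA u (take t s) A).

Lemma Pl_step n (u : 'I_n -> 'I_n -> R) mu i0 s A t :
  profile01 u -> uniq s -> t < size s ->
  (Pl u mu s A t.+1 <= Pl u mu s A t /\
   Pl u mu s A t - gl u mu i0 s A t - 1 <= Pl u mu s A t.+1)%R.
Proof.
move=> hu us ts; rewrite /Pl /gl (drop_nth i0 ts) (take_nth i0 ts) availA_rcons big_cons.
have ud : uniq (drop t.+1 s) by apply: drop_uniq.
have h0 : (0 <= gain u mu (nth i0 s t) (availA u (take t s) A))%R.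
  by rewrite /gain; case: ifP => _; [case: (u01 hu (nth i0 s t) (mu (nth i0 s t))) | lra].
have [h1 h2] := next_sum mu (nth i0 s t) (availA u (take t s) A) hu ud.
move: h0 h1 h2.
set S1 := \big[Rplus/0%R]_(k <- drop t.+1 s) gain u mu k (availA u (take t s) A).
set S2 := \big[Rplus/0%R]_(k <- drop t.+1 s) gain u mu k (nextA u _ _).
set g := gain u mu (nth i0 s t) _.
move=> h0 h1 h2; split; lra.
Qed.

Definition ordP n (s : 'S_n) := [seq s k | k <- enum 'I_n].

Lemma ordP_uniq n (s : 'S_n) : uniq (ordP s).
Proof. by rewrite map_inj_uniq ?enum_uniq //; apply: perm_inj. Qed.

Lemma ordP_size n (s : 'S_n) : size (ordP s) = n.
Proof. by rewrite size_map size_enum_ord. Qed.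

Lemma gain_ge0 n (u : 'I_n -> 'I_n -> R) mu k A : profile01 u -> (0 <= gain u mu k A)%R.
Proof. by move=> hu; rewrite /gain; case: ifP => _; [case: (u01 hu k (mu k)) | lra]. Qed.

Lemma Pl_ge0 n (u : 'I_n -> 'I_n -> R) mu s A t : profile01 u -> (0 <= Pl u mu s A t)%R.
Proof. by move=> hu; apply: rsum_ge0 => k _; apply: gain_ge0. Qed.

Lemma L1 n (u : 'I_n -> 'I_n -> R) mu i0 (s : 'S_n) : profile01 u ->
  (\big[Rplus/0%R]_(0 <= t < n) gl u mu i0 (ordP s) setT t <= sd_welfare u s)%R.
Proof.
move=> hu; have := sd_ge_gain mu (ordP s) setT hu.
by rewrite (gainsum_nth _ _ i0) ordP_size.
Qed.

Lemma L4 n (u : 'I_n -> 'I_n -> R) (s : 'S_n) : profile01 u -> 0 < n ->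
  (1 <= sd_welfare u s)%R.
Proof.
move=> hu n0; rewrite /sd_welfare -/(ordP s) -/(sdsum u _ _).
have := ordP_size s; case: (ordP s) => [|i r]; first by move=> e; rewrite -e in n0.
by move=> _; apply: sd_ge1.
Qed.

Lemma Pl0 n (u : 'I_n -> 'I_n -> R) mu (s : 'S_n) :
  Pl u mu (ordP s) setT 0 = welfare u mu.
Proof.
rewrite /Pl /welfare drop0 take0 /= /ordP big_map.
rewrite (eq_bigr (fun k => u (s k) (mu (s k)))); last by move=> k _; rewrite /gain in_setT.
rewrite big_enum /=.
rewrite [RHS](reindex_inj (@perm_inj _ s)) /=.
by apply: eq_bigl => k; rewrite inE.
Qed.

Lemma L2 n (u : 'I_n -> 'I_n -> R) mu i0 (s : 'S_n) t : profile01 u -> t <= n ->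
  (welfare u mu - \big[Rplus/0%R]_(0 <= k < t) gl u mu i0 (ordP s) setT k - INR t
     <= Pl u mu (ordP s) setT t)%R.
Proof.
move=> hu; elim: t => [|t IH] ht.
  rewrite big_geq // Pl0 /=; lra.
have ts : t < size (ordP s) by rewrite ordP_size.
have [_ h] := Pl_step mu i0 setT hu (ordP_uniq s) ts.
have := IH (ltnW ht); rewrite S_INR big_nat_recr //=.
move: h; set P1 := Pl _ _ _ _ t.+1; set P0 := Pl _ _ _ _ t.
set g := gl _ _ _ _ _ t; set S := \big[Rplus/0%R]_(0 <= k < t) _.
move=> *; lra.
Qed.

Lemma L3 n (u : 'I_n -> 'I_n -> R) mu (s : 'S_n) t T : profile01 u -> t <= T -> T <= n ->
  (Pl u mu (ordP s) setT T <= Pl u mu (ordP s) setT t)%R.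
Proof.
move=> hu tT; elim: T tT => [|T IH] tT hT.
  by rewrite leqn0 in tT; rewrite (eqP tT); lra.
rewrite leq_eqVlt in tT; case/orP: tT => [/eqP -> | tT]; first lra.
have ts : T < size (ordP s) by rewrite ordP_size.
have [h _] := Pl_step mu (Ordinal hT) setT hu (ordP_uniq s) ts.
have := IH tT (ltnW hT); lra.
Qed.

Lemma in_take_lt n t (y : 'I_n) : y \in take t (enum 'I_n) -> y < t.
Proof.
move=> h; have : val y \in map val (take t (enum 'I_n)) by apply: map_f.
by rewrite map_take val_enum_ord take_iota mem_iota add0n leq_min => /andP [_ /andP []].
Qed.

Lemma in_drop_ge n t (y : 'I_n) : y \in drop t (enum 'I_n) -> t <= y.
Proof.
move=> h; have : val y \in map val (drop t (enum 'I_n)) by apply: map_f.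
by rewrite map_drop val_enum_ord drop_iota mem_iota add0n => /andP [].
Qed.

Lemma take_ordP n (s : 'S_n) t : take t (ordP s) = map s (take t (enum 'I_n)).
Proof. by rewrite map_take. Qed.

Lemma L5 n (u : 'I_n -> 'I_n -> R) mu (i0 : 'I_n) t : t < n ->
  (INR (n - t) * \big[Rplus/0%R]_(s : 'S_n) gl u mu i0 (ordP s) setT t
   = \big[Rplus/0%R]_(s : 'S_n) Pl u mu (ordP s) setT t)%R.
Proof.
move=> tn.
set E := enum 'I_n.
have tE : t < size E by rewrite size_enum_ord.
set t0 := nth i0 E t.
have vt0 : (t0 : nat) = t by rewrite /t0 /E nth_enum_ord.
set Av := fun s : 'S_n => availA u (take t (ordP s)) setT.
have LHS : forall s : 'S_n, gl u mu i0 (ordP s) setT t = gain u mu (s t0) (Av s).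
  by move=> s; rewrite /gl /ordP (nth_map i0).
have RHS : forall s : 'S_n, Pl u mu (ordP s) setT t =
    \big[Rplus/0%R]_(x <- drop t E) gain u mu (s x) (Av s).
  by move=> s; rewrite /Pl /ordP -map_drop big_map.
rewrite (eq_bigr _ (fun s _ => LHS s)) (eq_bigr _ (fun s _ => RHS s)).
rewrite exchange_big /=.
rewrite [RHS in _ = RHS](eq_big_seq (fun _ => \big[Rplus/0%R]_(s : 'S_n) gain u mu (s t0) (Av s))).
  by rewrite rsum_const_seq size_drop size_enum_ord.
move=> x xd.
rewrite [RHS in _ = RHS](reindex_inj (mulgI (tperm t0 x))) /=.
apply: eq_bigr => s _.
have eA : Av ((tperm t0 x) * s)%g = Av s.
  rewrite /Av !take_ordP; congr (availA u _ _).
  apply/eq_in_map => y yt; rewrite permM tpermD //.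
    by apply/eqP => e; have := in_take_lt yt; rewrite -e vt0 ltnn.
  apply/eqP => e; have := in_take_lt yt; have := in_drop_ge xd.
  by rewrite e; case: ltnP.
by rewrite eA permM tpermL.
Qed.

Lemma bigmax_seq (T : eqType) (r : seq T) (F : T -> R) :
  ((forall i, i \in r -> F i <= \big[Rmax/0%R]_(j <- r) F j) /\
   (\big[Rmax/0%R]_(j <- r) F j = 0 \/ exists i, i \in r /\ \big[Rmax/0%R]_(j <- r) F j = F i))%R.
Proof.
elim: r => [|x r [IH1 IH2]]; first by split=> //; left; rewrite big_nil.
rewrite big_cons; split.
  move=> i; rewrite inE => /orP [/eqP -> | /IH1 h]; first by apply: Rmax_l.
  by apply: Rle_trans h (Rmax_r _ _).
rewrite /Rmax; case: Rle_dec => _.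
  case: IH2 => [->|[i [ir ->]]]; first by left.
  by right; exists i; rewrite inE ir orbT.
by right; exists x; rewrite inE eqxx.
Qed.

Lemma welfare_ge1 n (u : 'I_n -> 'I_n -> R) (i0 : 'I_n) : profile01 u ->
  exists nu : 'S_n, (1 <= welfare u nu)%R.
Proof.
move=> hu; case: (hu i0) => _ [_ [j1 hj1]].
exists (tperm i0 j1); rewrite /welfare (bigD1 i0) //= tpermL hj1.
rewrite -{1}(Rplus_0_r 1); apply: Rplus_le_compat; first lra.
by apply: rsum_ge0 => i _; case: (u01 hu i (tperm i0 j1 i)).
Qed.

Lemma opt_attained n (u : 'I_n -> 'I_n -> R) (i0 : 'I_n) : profile01 u ->
  exists mu : 'S_n, opt_welfare u = welfare u mu /\ (1 <= opt_welfare u)%R.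
Proof.
move=> hu; have [nu hnu] := welfare_ge1 i0 hu.
have [h1 h2] := bigmax_seq (index_enum {perm 'I_n}) (welfare u).
have hle : (welfare u nu <= opt_welfare u)%R by apply: h1; rewrite mem_index_enum.
case: h2 => [e|[mu [_ e]]].
  by rewrite /opt_welfare e in hle; lra.
by exists mu; split => //; lra.
Qed.

Local Open Scope R_scope.

Lemma final_ineq (n T W r : R) : 1 <= T -> T*T <= n -> n < (T+1)*(T+1) -> 1 <= r ->
  T*(W - r - T) <= n*r -> 0 < W -> 1/6 / sqrt n <= r / W.
Proof.
intros hT hTn hnT hr hq hW.
assert (n0 : 0 <= n) by nra.
set (s := sqrt n).
assert (hs : s * s = n) by (apply sqrt_sqrt; lra).
assert (s0 : 0 <= s) by (apply sqrt_pos).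
assert (Ts : T <= s).
{ destruct (Rle_dec T s) as [h|h]; auto. exfalso. nra. }
assert (sT : s < T + 1).
{ destruct (Rlt_dec s (T+1)) as [h|h]; auto. exfalso. nra. }
assert (key : W <= 6 * r * s).
{ destruct (Rle_dec W (3*s)) as [h|h].
  - nra.
  - destruct (Rle_dec (W/3) r) as [h2|h2].
    + nra.
    + assert (h3 : T * (W/3) <= s * s * r).
      { rewrite hs. apply Rle_trans with (T * (W - r - T)); [|exact hq].
        apply Rmult_le_compat_l; lra. }
      assert (h4 : s * (W/6) <= T * (W/3)) by nra.
      assert (h5 : s * (W/6) <= s * (s * r)) by nra.
      assert (sp : 0 < s) by lra.
      assert (h6 : W/6 <= s * r) by (apply (Rmult_le_reg_l s); lra).
      lra. }
assert (sp : 0 < s) by lra.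
apply (Rmult_le_reg_r (6*s*W)); [nra|].
replace (1/6/s*(6*s*W)) with W by (field; lra).
replace (r/W*(6*s*W)) with (6*r*s) by (field; lra).
lra.
Qed.

Close Scope R_scope.

Lemma rsum_le_seq (I : eqType) (r : seq I) (F G : I -> R) :
  (forall i, i \in r -> (F i <= G i)%R) ->
  (\big[Rplus/0%R]_(i <- r) F i <= \big[Rplus/0%R]_(i <- r) G i)%R.
Proof.
elim: r => [|x r IH] h; first by rewrite !big_nil; lra.
rewrite !big_cons; apply: Rplus_le_compat; first by apply: h; rewrite inE eqxx.
by apply: IH => i ir; apply: h; rewrite inE ir orbT.
Qed.

Theorem corollary1 :
  exists c : R, (0 < c)%R /\
    forall n : nat, (1 <= n)%N ->
      forall u : 'I_n -> 'I_n -> R, profile01 u ->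
        (c / sqrt (INR n) <= RP_welfare u / opt_welfare u)%R.
Proof.
exists (1/6)%R; split; first lra.
move=> n n1 u hu.
pose i0 := Ordinal n1.
have [mu [eW hW1]] := opt_attained i0 hu.
pose T := Nat.sqrt n.
have [hT1 hT2] := Nat.sqrt_spec' n.
have n1' : (1 <= n)%coq_nat by apply/leP.
have T1 : (1 <= T)%coq_nat.
  case e: T => [|k]; last lia.
  rewrite /T in e; rewrite e /= in hT2; lia.
have Tn : T <= n by apply/leP; rewrite /T; nia.
pose N := INR n`!.
have N0 : (0 < N)%R by apply: lt_0_INR; apply/ltP; apply: fact_gt0.
pose Rtot := \big[Rplus/0%R]_(s : 'S_n) sd_welfare u s.
pose W := welfare u mu.
pose Sg (t : nat) := \big[Rplus/0%R]_(s : 'S_n) gl u mu i0 (ordP s) setT t.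
pose Q (t : nat) := \big[Rplus/0%R]_(s : 'S_n) Pl u mu (ordP s) setT t.
pose G' := \big[Rplus/0%R]_(0 <= t < T) Sg t.
have ha : (N <= Rtot)%R.
  have := @rsum_le _ (index_enum {perm 'I_n}) predT (fun _ => 1%R) (sd_welfare u)
     (fun s _ => L4 s hu n1).
  by rewrite rsum_const_fin card_Sn Rmult_1_r.
have hb : (G' <= Rtot)%R.
  rewrite /G' /Sg exchange_big /=; apply: rsum_le => s _.
  apply: Rle_trans (L1 mu i0 s hu).
  rewrite [X in (_ <= X)%R](big_cat_nat _ (n := T)) //=.
  set X := \big[Rplus/0%R]_(T <= i < n) _.
  have : (0 <= X)%R by apply: rsum_ge0 => t _; apply: gain_ge0.
  set Y := \big[Rplus/0%R]_(0 <= i < T) _; lra.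
have hc : (N * W <= Q T + G' + N * INR T)%R.
  have hs : forall s : 'S_n, (W <= Pl u mu (ordP s) setT T +
      (\big[Rplus/0%R]_(0 <= k < T) gl u mu i0 (ordP s) setT k + INR T))%R.
    move=> s; have := L2 mu i0 s hu Tn; rewrite /W.
    set P := Pl _ _ _ _ T; set Z := \big[Rplus/0%R]_(0 <= k < T) _; lra.
  have h := @rsum_le _ (index_enum {perm 'I_n}) predT _ _ (fun s _ => hs s).
  rewrite !big_split /= rsum_const_fin rsum_const_fin card_Sn -/N exchange_big /= in h.
  move: h; rewrite /G' /Sg /Q.
  set A1 := \big[Rplus/0%R]_(s : 'S_n) Pl _ _ _ _ _.
  set A2 := \big[Rplus/0%R]_(0 <= t < T) _.
  move=> h; lra.
have hd : (INR T * Q T <= INR n * G')%R.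
  have ht : forall t, t \in index_iota 0 T -> (Q T <= INR n * Sg t)%R.
    move=> t; rewrite mem_index_iota => /andP [_ tT].
    have tn : t < n by apply: leq_trans tT Tn.
    have e := L5 u mu i0 tn.
    have q : (Q T <= Q t)%R.
      by apply: rsum_le => s _; apply: L3 => //; apply: ltnW.
    have sg0 : (0 <= Sg t)%R by apply: rsum_ge0 => s _; apply: gain_ge0.
    have le : (INR (n - t) <= INR n)%R by apply: le_INR; apply/leP; apply: leq_subr.
    have := Rmult_le_compat_r _ _ _ sg0 le.
    move: e q; rewrite /Q /Sg.
    set A1 := \big[Rplus/0%R]_(s : 'S_n) Pl _ _ _ _ t.
    set A2 := \big[Rplus/0%R]_(s : 'S_n) Pl _ _ _ _ T.
    set A3 := \big[Rplus/0%R]_(s : 'S_n) gl _ _ _ _ _ t.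
    move=> *; lra.
  have := rsum_le_seq ht; rewrite rsum_const_seq size_iota subn0 rsum_scale.
  by rewrite /G'.
pose r := RP_welfare u.
have eR : Rtot = (N * r)%R by rewrite /r /RP_welfare -/N -/Rtot; field; lra.
have r1 : (1 <= r)%R by nra.
have hq0 : (0 <= Q T)%R by apply: rsum_ge0 => s _; apply: Pl_ge0.
have TR1 : (1 <= INR T)%R by have := le_INR 1 T T1.
have p1 : (INR T * (N*W - N*r - N*INR T) <= INR T * Q T)%R.
  by apply: Rmult_le_compat_l; lra.
have p2 : (INR n * G' <= INR n * (N*r))%R.
  by apply: Rmult_le_compat_l; [apply: pos_INR | lra].
have key : (INR T * (W - r - INR T) <= INR n * r)%R.
  apply: (Rmult_le_reg_l N) => //.
  have -> : (N * (INR T * (W - r - INR T)) = INR T * (N*W - N*r - N*INR T))%R by ring.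
  have -> : (N * (INR n * r) = INR n * (N*r))%R by ring.
  lra.
rewrite eW -/W; apply: (@final_ineq (INR n) (INR T)) => //.
- by rewrite -mult_INR; apply: le_INR.
- by rewrite -S_INR -mult_INR; apply: lt_INR.
- by rewrite /W -eW; lra.
Qed.
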